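(* Let $q$ be a prime power and let $n,k$ be integers with $3\le k\le n-2\le q-2$. Let $\alpha_1,\dots,\alpha_n\in\mathbb{F}_q$ be pairwise distinct. Let $C_{k-1,k-2}$ be the linear code over $\mathbb{F}_q$ generated by the $k\times n$ matrix $G_{k-1,k-2}$ whose rows are $(\alpha_1^{e},\alpha_2^{e},\dots,\alpha_n^{e})$ for $e=0,1,\dots,k-3,k,k+1$ (in this order). Then $C_{k-1,k-2}$ is an $[n,k,d]$ linear code with $d\in\{n-k-1,\,n-k,\,n-k+1\}$.
   Context: Convention: $0^0=1$. An $[n,k,d]$ code is a linear code of length $n$, dimension $k$ and minimum Hamming distance $d$. *)

(* Defs.v *)
From HB Require Import structures.
From mathcomp Require Import all_boot all_order all_algebra all_field.
Set Implicit Arguments. Unset Strict Implicit. Unset Printing Implicit Defensive.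
Import GRing.Theory.
Local Open Scope ring_scope.

Definition hweight (F : fieldType) (n : nat) (c : 'rV[F]_n) : nat :=
  #|[set i : 'I_n | c 0 i != 0]|.

(* The linear code generated by G is the row space of G; d is its minimum
   Hamming distance (= minimum weight of a nonzero codeword, for linear codes). *)
Definition is_min_dist (F : fieldType) (k n : nat) (G : 'M[F]_(k, n)) (d : nat) : Prop :=
  (exists2 c : 'rV[F]_n, (c <= G)%MS /\ c != 0 & hweight c = d) /\
  (forall c : 'rV[F]_n, (c <= G)%MS -> c != 0 -> (d <= hweight c)%N).

Definition gexp (k : nat) (i : nat) : nat := if (i < k - 2)%N then i else (i + 2)%N.

Definition Gmat (F : fieldType) (k n : nat) (alpha : 'I_n -> F) : 'M[F]_(k, n) :=
  \matrix_(i < k, j < n) alpha j ^+ gexp k i.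

(* Main.v *)
Require Import Defs.
From HB Require Import structures.
From mathcomp Require Import all_boot all_order all_algebra all_field.
From mathcomp Require Import zify.
Local Open Scope ring_scope.
Import GRing.Theory.

Section Aux.
Variables (F : finFieldType) (n k : nat) (alpha : 'I_n -> F).

Definition pu (u : 'rV[F]_k) : {poly F} := \sum_(i < k) u 0 i *: 'X^(gexp k i).

Lemma gexp_inj : injective (gexp k).
Proof.
move=> i j; rewrite /gexp; case: ifP => hi; case: ifP => hj; lia.
Qed.

Lemma pu_eval (u : 'rV[F]_k) j : (u *m Gmat k alpha) 0 j = (pu u).[alpha j].
Proof.
rewrite !mxE horner_sum; apply: eq_bigr => i _.
by rewrite mxE hornerZ hornerXn.
Qed.

Lemma pu_coef (u : 'rV[F]_k) (i : 'I_k) : (pu u)`_(gexp k i) = u 0 i.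
Proof.
rewrite coef_sum (bigD1 i) //= coefZ coefXn eqxx mulr1 big1 ?addr0 //.
move=> j hj; rewrite coefZ coefXn (inj_eq gexp_inj).
by rewrite eq_sym (negbTE (hj : (j:nat) != i)) mulr0.
Qed.

Lemma pu_neq0 (u : 'rV[F]_k) : u != 0 -> pu u != 0.
Proof.
move=> hu; apply: contra hu => /eqP hp; apply/eqP/matrixP => a i.
by rewrite ord1 -pu_coef hp coef0 mxE.
Qed.

Lemma pu_size (u : 'rV[F]_k) : (size (pu u) <= k.+2)%N.
Proof.
apply: leq_trans (size_sum _ _ _) _.
apply/bigmax_leqP => i _.
apply: leq_trans (size_scale_leq _ _) _.
rewrite size_polyXn /gexp; case: ifP => _; have := ltn_ord i; lia.
Qed.

Lemma weight_lb (u : 'rV[F]_k) : injective alpha -> u != 0 ->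
  (n - k.+1 <= hweight (u *m Gmat k alpha))%N.
Proof.
move=> hinj hu.
set c := u *m Gmat k alpha.
set Z := [set i : 'I_n | c 0 i == 0].
have hZ : (#|Z| <= k.+1)%N.
  have := max_poly_roots (pu_neq0 u hu) (rs := [seq alpha j | j <- enum Z]).
  rewrite size_map -cardE => h.
  have : (#|Z| < size (pu u))%N.
    apply: h.
      apply/allP => x /mapP [j]; rewrite mem_enum inE => /eqP hj ->.
      by rewrite /root -pu_eval hj.
    by rewrite map_inj_uniq ?enum_uniq.
  have := pu_size u; lia.
have : hweight c = (n - #|Z|)%N.
  rewrite /hweight.
  have -> : [set i : 'I_n | c 0 i != 0] = ~: Z.
    by apply/setP => i; rewrite !inE.
  by rewrite cardsCs setCK card_ord.
lia.
Qed.

Lemma Gfree : injective alpha -> (k.+2 <= n)%N -> row_free (Gmat k alpha).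
Proof.
move=> hinj hkn; apply: inj_row_free => v hv.
apply/eqP; apply: contraT => hv0.
have := weight_lb v hinj hv0; rewrite hv.
have -> : hweight (0 : 'rV[F]_n) = 0%N.
  rewrite /hweight; apply/eqP; rewrite cards_eq0; apply/eqP/setP => i.
  by rewrite !inE mxE eqxx.
lia.
Qed.

End Aux.

Theorem theorem3p1 (F : finFieldType) (n k : nat) (alpha : 'I_n -> F)
  (hk3 : (3 <= k)%N) (hkn : (k <= n - 2)%N) (hnq : (n - 2 <= #|F| - 2)%N)
  (halpha : injective alpha) :
  \rank (Gmat k alpha) = k /\
  exists d : nat, is_min_dist (Gmat k alpha) d /\
    d \in [:: (n - k - 1)%N; (n - k)%N; (n - k + 1)%N].
Proof.
have hkn' : (k.+2 <= n)%N by lia.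
have hfree := @Gfree F n k alpha halpha hkn'.
split; first by apply/eqP.
set G := Gmat k alpha.
have hk1 : (k.-1 <= n)%N by lia.
set H := (\matrix_(i < k, j < k.-1) G i (widen_ord hk1 j) : 'M[F]_(k, k.-1)).
have hH : kermx H != 0.
  rewrite kermx_eq0 /row_free; apply/negP => /eqP h.
  have := rank_leq_col H; rewrite h; lia.
have [v hv hv0] := rowV0Pn hH.
have hvH : v *m H = 0 by apply/sub_kermxP.
set c0 := v *m G.
have hc0 : (c0 <= G)%MS /\ c0 != 0.
  split; first by apply: submxMl.
  apply: contra hv0 => /eqP h; apply/eqP.
  exact: (row_free_inj hfree (etrans h (esym (mul0mx _ _)))).
have hw0 : (hweight c0 <= n - k.-1)%N.
  set W := [set widen_ord hk1 j | j : 'I_k.-1].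
  have hW : #|W| = k.-1.
    rewrite card_imset ?card_ord //; move=> a b /(congr1 val) /= h; exact: val_inj.
  have : [set i : 'I_n | c0 0 i != 0] \subset ~: W.
    apply/subsetP => i; rewrite !inE; apply: contra => /imsetP [j _ ->].
    have e : (v *m G) 0 (widen_ord hk1 j) = (v *m H) 0 j.
      by rewrite !mxE; apply: eq_bigr => a _; rewrite ?mxE.
    by rewrite /c0 e hvH mxE.
  move/subset_leq_card; rewrite [#|~: W|]cardsCs setCK card_ord hW.
  by rewrite /hweight.
pose P d := [exists c : 'rV[F]_n, [&& (c <= G)%MS, c != 0 & hweight c == d]].
have exP : exists d, P d.
  exists (hweight c0); apply/existsP; exists c0.
  by case: hc0 => -> ->; rewrite eqxx.
case: (ex_minnP exP) => d /existsP [c /and3P [hcG hc /eqP hcd]] hmin.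
have lb : forall c', (c' <= G)%MS -> c' != 0 -> (n - k.+1 <= hweight c')%N.
  move=> c' /submxP [u ->] hc'.
  apply: weight_lb => //; apply: contra hc' => /eqP ->; by rewrite mul0mx.
exists d; split.
  split; first by exists c.
  move=> c' hc' hc'0; apply: hmin; apply/existsP; exists c'.
  by rewrite hc' hc'0 eqxx.
have h1 := lb c hcG hc.
have h2 : (d <= hweight c0)%N.
  apply: hmin; apply/existsP; exists c0; by case: hc0 => -> ->; rewrite eqxx.
rewrite !inE.
move: h1 h2 hw0 hkn'; rewrite hcd; move: (hweight c0) => w0.
move=> h1 h2 h3 h4.
have [m hm] : exists m, d = (n - k - 1 + m)%N by exists (d - (n - k - 1))%N; lia.
have hm2 : (m <= 2)%N by lia.
rewrite hm; case: m hm hm2 => [|[|[|m]]] // _ _.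
- by rewrite addn0 eqxx.
- have -> : (n - k - 1 + 1 = n - k)%N by lia.
  by rewrite eqxx orbT.
- have -> : (n - k - 1 + 2 = n - k + 1)%N by lia.
  by rewrite eqxx !orbT.
Qed.
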